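(* Fix $\beta>0$ and $h\in\mathbb{R}$, and suppose there is a number $q$ and a constant $C_0$ depending only on $\beta,h$ such that for every $N$, $$\mathbb{E}\langle (R_{12}-q)^4\rangle \le \frac{C_0}{N^2}.$$ Let $v_1,\dots,v_N,w_1,\dots,w_N$ be arbitrary (real-valued) functions of $g$ and $\sigma$. Then, with a constant $C(\beta,h)$ depending only on $\beta,h$ (and the constants in the hypothesis), $$\mathbb{E}\Bigl(\frac{1}{N^2}\sum_{j,k=1}^N\langle\dot\sigma_jv_k\rangle\langle w_k\sigma_j\rangle\Bigr) \le \frac{C(\beta,h)}{N^{3/2}}\sum_{k=1}^N\bigl(\mathbb{E}\langle v_k^2\rangle\langle w_k^2\rangle\bigr)^{1/2}.$$
   Context: Sherrington–Kirkpatrick model: for a positive integer $N$, let $\Sigma_N=\{-1,1\}^N$ and let $g=(g_{ij})_{1\le i<j\le N}$ be i.i.d. standard Gaussian random variables (the disorder). Given $g$, the Gibbs measure on $\Sigma_N$ is $G_N(\sigma)=Z_N^{-1}\exp\bigl(\frac{\beta}{\sqrt N}\sum_{1\le i<j\le N} g_{ij}\sigma_i\sigma_j + h\sum_{i=1}^N\sigma_i\bigr)$, with $Z_N$ the normalizing constant. Replicas $\sigma^1,\sigma^2,\dots$ are independent samples from $G_N$ given $g$, and for a function $f$ of $g$ and replicas, $\langle f\rangle$ denotes the quenched average (expectation over replicas with $g$ fixed); in $\langle\dot\sigma_jv_k\rangle$ the functions are evaluated at the same configuration $\sigma$. $\mathbb{E}$ is expectation over the disorder. The overlap is $R_{12}=\frac1N\sum_{i=1}^N\sigma^1_i\sigma^2_i$.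 For each $j$, $\dot\sigma_j := \sigma_j - \langle\sigma_j\rangle$. *)

(* Defs.v *)
From HB Require Import structures.
From mathcomp Require Import all_boot all_order all_algebra.
From mathcomp Require Import all_classical all_reals all_analysis.
Set Implicit Arguments. Unset Strict Implicit. Unset Printing Implicit Defensive.
Import Order.TTheory GRing.Theory Num.Theory.
Local Open Scope classical_set_scope.
Local Open Scope ring_scope.

(* Configurations sigma in Sigma_N = {-1,1}^N, encoded as boolean vectors:
   spin s i = 1 if s i = true, -1 otherwise. *)
Definition config (N : nat) := {ffun 'I_N -> bool}.

Section SK.
Variable R : realType.

Definition spin (N : nat) (s : config N) (i : 'I_N) : R := if s i then 1 else -1.

(* A disorder realization: g i j is used only for i < j. *)
Definition disorder (N : nat) := 'I_N -> 'I_N -> R.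

Definition sk_energy (beta h : R) (N : nat) (g : disorder N) (s : config N) : R :=
  beta / Num.sqrt N%:R *
    (\sum_(i < N) \sum_(j < N | (i < j)%N) g i j * spin s i * spin s j)
  + h * \sum_(i < N) spin s i.

Definition gibbs_weight beta h N (g : disorder N) (s : config N) : R :=
  expR (sk_energy beta h g s).

Definition partition_fn beta h N (g : disorder N) : R :=
  \sum_(s : config N) gibbs_weight beta h g s.

Definition gibbs1 beta h N (g : disorder N) (f : config N -> R) : R :=
  (\sum_(s : config N) gibbs_weight beta h g s * f s) / partition_fn beta h g.

Definition gibbs2 beta h N (g : disorder N) (f : config N -> config N -> R) : R :=
  (\sum_(s1 : config N) \sum_(s2 : config N)
      gibbs_weight beta h g s1 * gibbs_weight beta h g s2 * f s1 s2)
  / (partition_fn beta h g ^+ 2).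

Definition overlap N (s1 s2 : config N) : R :=
  (\sum_(i < N) spin s1 i * spin s2 i) / N%:R.

Definition sdot beta h N (g : disorder N) (j : 'I_N) (s : config N) : R :=
  spin s j - gibbs1 beta h g (fun s' => spin s' j).

Definition iid_std_gaussian_disorder d (T : measurableType d)
    (P : probability T R) (N : nat) (G : 'I_N -> 'I_N -> T -> R) : Prop :=
  [/\ (forall i j : 'I_N, (i < j)%N -> measurable_fun setT (G i j)),
      (forall i j : 'I_N, (i < j)%N -> forall B : set R, measurable B ->
          P (G i j @^-1` B) = normal_prob 0 1 B) &
      (forall B : 'I_N -> 'I_N -> set R,
          (forall i j : 'I_N, (i < j)%N -> measurable (B i j)) ->
          fine (P (\big[setI/setT]_(i < N) \big[setI/setT]_(j < N | (i < j)%N)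
                     (G i j @^-1` B i j)))
          = \prod_(i < N) \prod_(j < N | (i < j)%N) fine (P (G i j @^-1` B i j)))].

Definition disorder_at N d (T : measurableType d) (G : 'I_N -> 'I_N -> T -> R)
  (w : T) : disorder N := fun i j => G i j w.

End SK.

(* Main.v *)
Require Import Defs.
From HB Require Import structures.
From mathcomp Require Import all_boot all_order all_algebra.
From mathcomp Require Import all_classical all_reals all_analysis.
From mathcomp Require Import ring lra measurable_realfun.
Import Order.TTheory GRing.Theory Num.Theory.
Local Open Scope classical_set_scope.
Local Open Scope ring_scope.
Lemma cs_fin (R : realType) (I : finType) (c x y : I -> R) :
  (forall i, 0 <= c i) ->
  (\sum_i c i * x i * y i) ^+ 2 <= (\sum_i c i * x i ^+ 2) * (\sum_i c i * y i ^+ 2).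
Proof.
move=> c0.
set A := \sum_i c i * x i ^+ 2; set B := \sum_i c i * x i * y i;
set C := \sum_i c i * y i ^+ 2.
have quad t : 0 <= t ^+ 2 * A + 2 * t * B + C.
  have -> : t ^+ 2 * A + 2 * t * B + C = \sum_i c i * (t * x i + y i) ^+ 2.
    rewrite /A /B /C !mulr_sumr -!big_split /=; apply: eq_bigr => i _; ring.
  by apply: sumr_ge0 => i _; rewrite mulr_ge0 // sqr_ge0.
have A0 : 0 <= A by apply: sumr_ge0 => i _; rewrite mulr_ge0 // sqr_ge0.
have C0 : 0 <= C by apply: sumr_ge0 => i _; rewrite mulr_ge0 // sqr_ge0.
have [Ap|A00] := ltP 0 A.
  have := quad (- B / A).
  have -> : (- B / A) ^+ 2 * A + 2 * (- B / A) * B + C = (A * C - B ^+ 2) / A.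
    by field; rewrite gt_eqF.
  by rewrite pmulr_lge0 ?invr_gt0 // subr_ge0.
have Az : A = 0 by apply/eqP; rewrite eq_le A00 A0.
have Bz : B = 0.
  have : forall i, true -> c i * x i ^+ 2 = 0.
    by apply/psumr_eq0P => [i _|//]; rewrite mulr_ge0 // sqr_ge0.
  move=> h; rewrite /B big1 // => i _.
  have : (c i * x i) ^+ 2 = 0.
    have -> : (c i * x i) ^+ 2 = c i * (c i * x i ^+ 2) by ring.
    by rewrite (h i) // mulr0.
  by move/eqP; rewrite sqrf_eq0 => /eqP ->; rewrite mul0r.
by rewrite Az Bz expr0n /= mul0r.
Qed.

Lemma cs_fin2 (R : realType) (I : finType) (c x y : I -> I -> R) :
  (forall i j, 0 <= c i j) ->
  (\sum_i \sum_j c i j * x i j * y i j) ^+ 2 <=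
  (\sum_i \sum_j c i j * x i j ^+ 2) * (\sum_i \sum_j c i j * y i j ^+ 2).
Proof.
move=> c0; rewrite !pair_big /=.
have := @cs_fin R _ (fun p : I * I => c p.1 p.2) (fun p => x p.1 p.2) (fun p => y p.1 p.2).
by apply => p; exact: c0.
Qed.

Lemma jensen_fin (R : realType) (I : finType) (mu z : I -> R) :
  (forall i, 0 <= mu i) -> \sum_i mu i = 1 ->
  (\sum_i mu i * z i) ^+ 2 <= \sum_i mu i * z i ^+ 2.
Proof.
move=> m0 m1; have /= := @cs_fin R _ mu (fun _ => 1) z m0.
have -> : \sum_i mu i * 1 ^+ 2 = 1 by under eq_bigr do rewrite expr1n mulr1.
by rewrite mul1r; under eq_bigr do rewrite mulr1.
Qed.
Set Implicit Arguments. Unset Strict Implicit.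
Lemma sum2_mu (R : realType) (I : finType) (mu : I -> R) :
  \sum_i mu i = 1 -> \sum_s \sum_t mu s * mu t = 1.
Proof.
move=> m1; transitivity (\sum_s mu s * \sum_t mu t).
  by apply: eq_bigr => s _; rewrite mulr_sumr.
by rewrite m1; under eq_bigr do rewrite mulr1.
Qed.

Lemma A_le_sqrtB (R : realType) (I : finType) (mu : I -> R) (z : I -> I -> R) :
  (forall i, 0 <= mu i) -> \sum_i mu i = 1 ->
  \sum_s \sum_t mu s * mu t * z s t ^+ 2 <=
  Num.sqrt (\sum_s \sum_t mu s * mu t * z s t ^+ 4).
Proof.
move=> m0 m1.
have h : (\sum_s \sum_t mu s * mu t * 1 * z s t ^+ 2) ^+ 2 <=
    (\sum_s \sum_t mu s * mu t * 1 ^+ 2) * (\sum_s \sum_t mu s * mu t * (z s t ^+ 2) ^+ 2).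
  exact: (@cs_fin2 R I (fun s t => mu s * mu t) (fun _ _ => 1) (fun s t => z s t ^+ 2)
     (fun s t => mulr_ge0 (m0 s) (m0 t))).
have e1 : \sum_s \sum_t mu s * mu t * 1 ^+ 2 = \sum_s \sum_t mu s * mu t.
  by apply: eq_bigr => s _; apply: eq_bigr => t _; rewrite expr1n mulr1.
have e2 : \sum_s \sum_t mu s * mu t * 1 * z s t ^+ 2 = \sum_s \sum_t mu s * mu t * z s t ^+ 2.
  by apply: eq_bigr => s _; apply: eq_bigr => t _; rewrite mulr1.
have e3 : \sum_s \sum_t mu s * mu t * (z s t ^+ 2) ^+ 2 = \sum_s \sum_t mu s * mu t * z s t ^+ 4.
  by apply: eq_bigr => s _; apply: eq_bigr => t _; rewrite -exprM.
rewrite e1 e2 e3 sum2_mu // mul1r in h.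
rewrite -(ler_sqrt) ?sqrtr_sqr in h; last first.
  by apply: sumr_ge0 => s _; apply: sumr_ge0 => t _; apply: mulr_ge0; [exact: mulr_ge0 | exact: exprn_even_ge0].
apply: le_trans h; exact: ler_norm.
Qed.

Definition Yf (R : realType) (N : nat) (mu : config N -> R) (s t : config N) : R :=
  \sum_(j < N) (spin R s j - \sum_u mu u * spin R u j) * spin R t j.

Lemma Yf_eq (R : realType) (N : nat) (mu : config N -> R) (q : R) s t :
  (0 < N)%N -> \sum_u mu u = 1 ->
  Yf mu s t = N%:R * ((overlap R s t - q) - \sum_u mu u * (overlap R u t - q)).
Proof.
move=> N0 m1.
have Nz : N%:R != 0 :> R by rewrite pnatr_eq0 -lt0n.
have ov u : \sum_(j < N) spin R u j * spin R t j = N%:R * overlap R u t.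
  by rewrite /overlap mulrC divfK.
rewrite /Yf; under eq_bigr do rewrite mulrBl; rewrite sumrB ov.
have -> : \sum_(j < N) (\sum_u mu u * spin R u j) * spin R t j =
          \sum_u mu u * (N%:R * overlap R u t).
  rewrite (eq_bigr (fun j => \sum_u mu u * spin R u j * spin R t j)); last first.
    by move=> j _; rewrite mulr_suml.
  rewrite exchange_big; apply: eq_bigr => u _; rewrite -ov mulr_sumr.
  by apply: eq_bigr => j _; rewrite mulrA.
have -> : \sum_u mu u * (N%:R * overlap R u t) = N%:R * \sum_u mu u * overlap R u t.
  by rewrite mulr_sumr; apply: eq_bigr => u _; ring.
have -> : \sum_u mu u * (overlap R u t - q) = \sum_u mu u * overlap R u t - q.
  under eq_bigr do rewrite mulrBr.
  by rewrite sumrB -mulr_suml m1 mul1r.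
ring.
Qed.

Lemma Y_bound (R : realType) (N : nat) (mu : config N -> R) (q : R) :
  (0 < N)%N -> (forall s, 0 <= mu s) -> \sum_u mu u = 1 ->
  \sum_s \sum_t mu s * mu t * Yf mu s t ^+ 2 <=
  4 * N%:R ^+ 2 * \sum_s \sum_t mu s * mu t * (overlap R s t - q) ^+ 2.
Proof.
move=> N0 m0 m1.
set c := fun t => \sum_u mu u * (overlap R u t - q) ^+ 2.
have hc t : (\sum_u mu u * (overlap R u t - q)) ^+ 2 <= c t by exact: jensen_fin.
apply: (@le_trans _ _ (\sum_s \sum_t mu s * mu t *
   (2 * N%:R ^+ 2 * ((overlap R s t - q) ^+ 2 + c t)))).
  apply: ler_sum => s _; apply: ler_sum => t _.
  apply: ler_wpM2l; first by rewrite mulr_ge0.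
  rewrite (Yf_eq q s t N0 m1).
  set a := overlap R s t - q; set b := \sum_u _ * _.
  have := hc t; rewrite -/b => hb.
  have h1 : (a - b) ^+ 2 <= 2 * (a ^+ 2 + c t).
    by have := sqr_ge0 (a + b); nra.
  rewrite exprMn; apply: le_trans (ler_wpM2l (sqr_ge0 (N%:R : R)) h1) _.
  by rewrite le_eqVlt; apply/orP; left; apply/eqP; ring.
have eA : \sum_s \sum_t mu s * mu t * c t =
          \sum_s \sum_t mu s * mu t * (overlap R s t - q) ^+ 2.
  transitivity (\sum_t mu t * c t).
    transitivity (\sum_s mu s * \sum_t mu t * c t).
      by apply: eq_bigr => s _; rewrite mulr_sumr; apply: eq_bigr => t _; rewrite mulrA.
    by rewrite -mulr_suml m1 mul1r.
  rewrite /c; under eq_bigr do rewrite mulr_sumr.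
  rewrite exchange_big; apply: eq_bigr => u _; apply: eq_bigr => t _; ring.
have -> : \sum_s \sum_t mu s * mu t * (2 * N%:R ^+ 2 * ((overlap R s t - q) ^+ 2 + c t)) =
   2 * N%:R ^+ 2 * (\sum_s \sum_t mu s * mu t * (overlap R s t - q) ^+ 2 +
                    \sum_s \sum_t mu s * mu t * c t).
  rewrite -big_split mulr_sumr; apply: eq_bigr => s _.
  rewrite -big_split mulr_sumr; apply: eq_bigr => t _ /=; ring.
rewrite eA; rewrite le_eqVlt; apply/orP; left; apply/eqP; ring.
Qed.

Lemma key (R : realType) (N : nat) (mu : config N -> R) (v w : 'I_N -> config N -> R) (q : R) :
  (0 < N)%N -> (forall s, 0 <= mu s) -> \sum_s mu s = 1 ->
  `| (N%:R ^+ 2)^-1 * \sum_(j < N) \sum_(k < N)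
      (\sum_s mu s * ((spin R s j - \sum_u mu u * spin R u j) * v k s)) *
      (\sum_s mu s * (w k s * spin R s j)) |
  <= \sum_(k < N) (N%:R^-1 * (Num.sqrt ((\sum_s mu s * v k s ^+ 2) * (\sum_s mu s * w k s ^+ 2))
        * (2 * Num.sqrt (Num.sqrt (\sum_s \sum_t mu s * mu t * (overlap R s t - q) ^+ 4))))).
Proof.
move=> N0 m0 m1.
have Np : 0 < N%:R :> R by rewrite ltr0n.
set B := \sum_s \sum_t mu s * mu t * (overlap R s t - q) ^+ 4.
have B0 : 0 <= B.
  by apply: sumr_ge0 => s _; apply: sumr_ge0 => t _; apply: mulr_ge0; [exact: mulr_ge0 | exact: exprn_even_ge0].
have c0 s t : 0 <= mu s * mu t by rewrite mulr_ge0.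
have hS k : \sum_(j < N)
      (\sum_s mu s * ((spin R s j - \sum_u mu u * spin R u j) * v k s)) *
      (\sum_s mu s * (w k s * spin R s j)) =
    \sum_s \sum_t mu s * mu t * (v k s * w k t) * Yf mu s t.
  transitivity (\sum_(j < N) \sum_s \sum_t mu s * mu t * (v k s * w k t) *
                 ((spin R s j - \sum_u mu u * spin R u j) * spin R t j)).
    apply: eq_bigr => j _; rewrite mulr_suml; apply: eq_bigr => s _.
    rewrite mulr_sumr; apply: eq_bigr => t _; ring.
  rewrite exchange_big; apply: eq_bigr => s _.
  rewrite exchange_big; apply: eq_bigr => t _.
  by rewrite /Yf mulr_sumr.
have hYb : Num.sqrt (\sum_s \sum_t mu s * mu t * Yf mu s t ^+ 2) <=
           2 * N%:R * Num.sqrt (Num.sqrt B).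
  apply: (@le_trans _ _ (Num.sqrt (4 * N%:R ^+ 2 * Num.sqrt B))).
    rewrite ler_sqrt; last by rewrite mulr_ge0 ?sqrtr_ge0 // mulr_ge0 // sqr_ge0.
    apply: le_trans (Y_bound q N0 m0 m1) _.
    rewrite ler_wpM2l // ?mulr_ge0 // ?sqr_ge0 //.
    exact: (A_le_sqrtB (fun s t => overlap R s t - q) m0 m1).
  rewrite sqrtrM; last by rewrite mulr_ge0 // sqr_ge0.
  have -> : 4 * N%:R ^+ 2 = (2 * N%:R) ^+ 2 :> R by ring.
  by rewrite sqrtr_sqr ger0_norm // mulr_ge0 // ltW.
have hSk k : `| \sum_s \sum_t mu s * mu t * (v k s * w k t) * Yf mu s t | <=
    Num.sqrt ((\sum_s mu s * v k s ^+ 2) * (\sum_s mu s * w k s ^+ 2)) *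
    (2 * N%:R * Num.sqrt (Num.sqrt B)).
  have h := @cs_fin2 R _ (fun s t => mu s * mu t) (fun s t => v k s * w k t) (fun s t => Yf mu s t) c0.
  have eVW : \sum_s \sum_t mu s * mu t * (v k s * w k t) ^+ 2 =
      (\sum_s mu s * v k s ^+ 2) * (\sum_s mu s * w k s ^+ 2).
    rewrite mulr_suml; apply: eq_bigr => s _; rewrite mulr_sumr; apply: eq_bigr => t _; ring.
  rewrite /= eVW in h.
  have VW0 : 0 <= (\sum_s mu s * v k s ^+ 2) * (\sum_s mu s * w k s ^+ 2).
    by rewrite mulr_ge0 // sumr_ge0 // => s _; rewrite mulr_ge0 // sqr_ge0.
  rewrite -ler_sqrt in h; last first.
    rewrite mulr_ge0 // sumr_ge0 // => s _; rewrite sumr_ge0 // => t _.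
    by rewrite mulr_ge0 // sqr_ge0.
  rewrite sqrtr_sqr sqrtrM // in h.
  apply: le_trans h _; apply: ler_wpM2l => //; exact: sqrtr_ge0.
rewrite exchange_big /= normrM ger0_norm; last by rewrite invr_ge0 sqr_ge0.
under eq_bigr do rewrite hS.
apply: le_trans (ler_wpM2l _ (ler_norm_sum _ _ _)) _; first by rewrite invr_ge0 sqr_ge0.
apply: le_trans (ler_wpM2l _ (ler_sum _ (fun k _ => hSk k))) _; first by rewrite invr_ge0 sqr_ge0.
rewrite mulr_sumr le_eqVlt; apply/orP; left; apply/eqP; apply: eq_bigr => k _.
by field; rewrite gt_eqF.
Qed.
Definition gmu (R : realType) (beta h : R) (N : nat) (g : disorder R N) (s : config N) : R :=
  gibbs_weight beta h g s / partition_fn beta h g.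

Lemma Z_gt0 (R : realType) (beta h : R) (N : nat) (g : disorder R N) :
  0 < partition_fn beta h g.
Proof.
rewrite /partition_fn (bigD1 [ffun=> true]) //=.
apply: (@lt_le_trans _ _ (gibbs_weight beta h g [ffun=> true])); first exact: expR_gt0.
rewrite lerDl sumr_ge0 // => s _.
exact: expR_ge0.
Qed.

Lemma gmu_ge0 (R : realType) (beta h : R) (N : nat) (g : disorder R N) s :
  0 <= gmu beta h g s.
Proof. by rewrite /gmu divr_ge0 ?expR_ge0 // ltW // Z_gt0. Qed.

Lemma gmu_sum (R : realType) (beta h : R) (N : nat) (g : disorder R N) :
  \sum_s gmu beta h g s = 1.
Proof. by rewrite /gmu -mulr_suml mulfV // gt_eqF // Z_gt0. Qed.

Lemma gibbs1E (R : realType) (beta h : R) (N : nat) (g : disorder R N) f :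
  gibbs1 beta h g f = \sum_s gmu beta h g s * f s.
Proof. by rewrite /gibbs1 mulr_suml; apply: eq_bigr => s _; rewrite /gmu mulrAC. Qed.

Lemma gibbs2E (R : realType) (beta h : R) (N : nat) (g : disorder R N) F :
  gibbs2 beta h g F = \sum_s \sum_t gmu beta h g s * gmu beta h g t * F s t.
Proof.
have Zn : partition_fn beta h g != 0 by rewrite gt_eqF // Z_gt0.
rewrite /gibbs2 mulr_suml; apply: eq_bigr => s _; rewrite mulr_suml; apply: eq_bigr => t _.
by rewrite /gmu; field.
Qed.

Lemma pointwise (R : realType) (beta h q : R) (N : nat) (g : disorder R N)
   (v w : 'I_N -> config N -> R) : (0 < N)%N ->
  `| (N%:R ^+ 2)^-1 * \sum_(j < N) \sum_(k < N)
      gibbs1 beta h g (fun s => sdot beta h g j s * v k s) *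
      gibbs1 beta h g (fun s => w k s * spin R s j) |
  <= \sum_(k < N) (N%:R^-1 * (Num.sqrt (gibbs1 beta h g (fun s => v k s ^+ 2) *
                                          gibbs1 beta h g (fun s => w k s ^+ 2))
        * (2 * Num.sqrt (Num.sqrt (gibbs2 beta h g (fun s1 s2 => (overlap R s1 s2 - q) ^+ 4)))))).
Proof.
move=> N0; rewrite gibbs2E.
under eq_bigr do under eq_bigr do rewrite /sdot !gibbs1E.
under [in X in _ <= X]eq_bigr do rewrite !gibbs1E.
exact: (key v w q N0 (@gmu_ge0 R beta h N g) (gmu_sum beta h g)).
Qed.

Lemma gibbs1_ge0 (R : realType) (beta h : R) (N : nat) (g : disorder R N) f :
  (forall s, 0 <= f s) -> 0 <= gibbs1 beta h g f.
Proof.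
move=> f0; rewrite gibbs1E sumr_ge0 // => s _; apply: mulr_ge0; [exact: gmu_ge0 | exact: f0].
Qed.

Lemma gibbs2_ge0 (R : realType) (beta h : R) (N : nat) (g : disorder R N) F :
  (forall s t, 0 <= F s t) -> 0 <= gibbs2 beta h g F.
Proof.
move=> F0; rewrite gibbs2E sumr_ge0 // => s _; rewrite sumr_ge0 // => t _.
apply: mulr_ge0; [apply: mulr_ge0; exact: gmu_ge0 | exact: F0].
Qed.
Lemma mbig_cond (d : measure_display) (T : measurableType d) (R : realType) (I : finType)
  (P : pred I) (f : I -> T -> R) :
  (forall i, P i -> measurable_fun setT (f i)) ->
  measurable_fun setT (fun x => \sum_(i | P i) f i x).
Proof.
move=> mf.
rewrite (_ : (fun x => _) = (fun x => \sum_i (if P i then f i x else 0))); last first.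
  by apply/funext => x; rewrite big_mkcond.
apply: measurable_sum => i; case Pi: (P i); [exact: mf | exact: measurable_cst].
Qed.

Section meas.
End meas.

Lemma m_energy (R : realType) (beta h : R) (N : nat) (d : measure_display) (T : measurableType d)
  (G : 'I_N -> 'I_N -> T -> R) s :
  (forall i j : 'I_N, (i < j)%N -> measurable_fun setT (G i j)) ->
  measurable_fun setT (fun x => sk_energy beta h (disorder_at G x) s).
Proof.
move=> mG; rewrite /sk_energy /disorder_at.
apply: measurable_funD; last exact: measurable_cst.
apply: measurable_funM; first exact: measurable_cst.
apply: measurable_sum => i; apply: mbig_cond => j ij.
apply: measurable_funM; last exact: measurable_cst.
apply: measurable_funM; last exact: measurable_cst.
exact: mG.
Qed.

Lemma m_Z (R : realType) (beta h : R) (N : nat) (d : measure_display) (T : measurableType d)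
  (G : 'I_N -> 'I_N -> T -> R) :
  (forall i j : 'I_N, (i < j)%N -> measurable_fun setT (G i j)) ->
  measurable_fun setT (fun x => partition_fn beta h (disorder_at G x)).
Proof.
move=> mG; rewrite /partition_fn; apply: measurable_sum => s.
exact: measurableT_comp (@measurable_expR R) (m_energy beta h s mG).
Qed.

Lemma gmuE (R : realType) (beta h : R) (N : nat) (g : disorder R N) s :
  gmu beta h g s = expR (sk_energy beta h g s - ln (partition_fn beta h g)).
Proof.
rewrite expRD expRN; have := Z_gt0 beta h g; rewrite -lnK_eq => /eqP ->.
by [].
Qed.

Lemma m_gmu (R : realType) (beta h : R) (N : nat) (d : measure_display) (T : measurableType d)
  (G : 'I_N -> 'I_N -> T -> R) s :
  (forall i j : 'I_N, (i < j)%N -> measurable_fun setT (G i j)) ->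
  measurable_fun setT (fun x => gmu beta h (disorder_at G x) s).
Proof.
move=> mG.
rewrite (_ : (fun x => _) = (fun x => expR (sk_energy beta h (disorder_at G x) s -
             ln (partition_fn beta h (disorder_at G x))))); last first.
  by apply/funext => x; rewrite gmuE.
apply: measurableT_comp (@measurable_expR R) _.
apply: measurable_funB; first exact: m_energy.
exact: measurableT_comp (@measurable_ln R) (m_Z beta h mG).
Qed.

Lemma m_gibbs1 (R : realType) (beta h : R) (N : nat) (d : measure_display) (T : measurableType d)
  (G : 'I_N -> 'I_N -> T -> R) (F : config N -> T -> R) :
  (forall i j : 'I_N, (i < j)%N -> measurable_fun setT (G i j)) ->
  (forall s, measurable_fun setT (F s)) ->
  measurable_fun setT (fun x => gibbs1 beta h (disorder_at G x) (fun s => F s x)).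
Proof.
move=> mG mF.
rewrite (_ : (fun x => _) = (fun x => \sum_s gmu beta h (disorder_at G x) s * F s x)); last first.
  by apply/funext => x; rewrite gibbs1E.
apply: measurable_sum => s; apply: measurable_funM; [exact: m_gmu | exact: mF].
Qed.

Lemma m_gibbs2 (R : realType) (beta h : R) (N : nat) (d : measure_display) (T : measurableType d)
  (G : 'I_N -> 'I_N -> T -> R) (F : config N -> config N -> T -> R) :
  (forall i j : 'I_N, (i < j)%N -> measurable_fun setT (G i j)) ->
  (forall s t, measurable_fun setT (F s t)) ->
  measurable_fun setT (fun x => gibbs2 beta h (disorder_at G x) (fun s t => F s t x)).
Proof.
move=> mG mF.
rewrite (_ : (fun x => _) = (fun x => \sum_s \sum_t
     gmu beta h (disorder_at G x) s * gmu beta h (disorder_at G x) t * F s t x)); last first.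
  by apply/funext => x; rewrite gibbs2E.
apply: measurable_sum => s; apply: measurable_sum => t.
apply: measurable_funM; last exact: mF.
apply: measurable_funM; exact: m_gmu.
Qed.

Lemma m_sqrt (d : measure_display) (T : measurableType d) (R : realType) (f : T -> R) :
  measurable_fun setT f -> measurable_fun setT (fun x => Num.sqrt (f x)).
Proof.
move=> mf; apply: measurableT_comp mf.
exact: continuous_measurable_fun (@sqrt_continuous R).
Qed.
Unset Implicit Arguments. Set Strict Implicit.
Lemma Lnorm2E (d : measure_display) (T : measurableType d) (R : realType)
  (P : probability T R) (a : T -> R) :
  (forall x, 0 <= a x) ->
  ('N[P]_(2%:E)[EFin \o a] = sqrte (\int[P]_x (a x ^+ 2)%:E))%E.
Proof.
move=> a0; rewrite Lnorm.unlock /=.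
rewrite (eq_integral (fun x => (a x ^+ 2)%:E)); last first.
  by move=> x _ /=; rewrite ger0_norm // powR_mulrn.
rewrite poweR12_sqrt //; apply: integral_ge0 => x _; by rewrite lee_fin sqr_ge0.
Qed.

Lemma int_prod_le (d : measure_display) (T : measurableType d) (R : realType)
  (P : probability T R) (a b : T -> R) :
  measurable_fun setT a -> measurable_fun setT b ->
  (forall x, 0 <= a x) -> (forall x, 0 <= b x) ->
  (\int[P]_x (a x * b x)%:E <=
     sqrte (\int[P]_x (a x ^+ 2)%:E) * sqrte (\int[P]_x (b x ^+ 2)%:E))%E.
Proof.
move=> ma mb a0 b0.
have := @hoelder _ _ _ P a b 2 2 ma mb (ltr0Sn _ _) (ltr0Sn _ _).
rewrite Lnorm1 !Lnorm2E //.
have h2 : (2^-1 + 2^-1 = 1 :> R) by field.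
move=> /(_ h2); apply: le_trans.
rewrite le_eqVlt; apply/orP; left; apply/eqP.
by apply: eq_integral => x _ /=; rewrite ger0_norm // mulr_ge0.
Qed.


Theorem lemma3p1 (R : realType) (beta h q C0 : R) :
  0 < beta ->
  (forall (N : nat) (d : measure_display) (T : measurableType d)
          (P : probability T R) (G : 'I_N -> 'I_N -> T -> R),
      (0 < N)%N -> iid_std_gaussian_disorder P G ->
      (\int[P]_w (gibbs2 beta h (disorder_at G w)
                    (fun s1 s2 => (overlap R s1 s2 - q) ^+ 4))%:E
        <= (C0 / (N%:R ^+ 2))%:E)%E) ->
  exists C : R,
  forall (N : nat) (d : measure_display) (T : measurableType d)
         (P : probability T R) (G : 'I_N -> 'I_N -> T -> R)
         (v w : 'I_N -> disorder R N -> config N -> R),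
    (0 < N)%N -> iid_std_gaussian_disorder P G ->
    (forall (k : 'I_N) (s : config N),
        measurable_fun setT (fun x => v k (disorder_at G x) s)) ->
    (forall (k : 'I_N) (s : config N),
        measurable_fun setT (fun x => w k (disorder_at G x) s)) ->
    (\int[P]_x
        ((N%:R ^+ 2)^-1 *
         \sum_(j < N) \sum_(k < N)
           gibbs1 beta h (disorder_at G x)
             (fun s => sdot beta h (disorder_at G x) j s * v k (disorder_at G x) s)
           * gibbs1 beta h (disorder_at G x)
             (fun s => w k (disorder_at G x) s * spin R s j))%:E
     <= (C / (N%:R `^ (3 / 2)))%:E *
        \sum_(k < N)
          sqrte (\int[P]_x
                   (gibbs1 beta h (disorder_at G x)
                      (fun s => v k (disorder_at G x) s ^+ 2)
                    * gibbs1 beta h (disorder_at G x)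
                      (fun s => w k (disorder_at G x) s ^+ 2))%:E))%E.
Proof.
move=> beta0 hyp.
pose C1 := Num.max C0 0.
have C10 : 0 <= C1 by rewrite le_max lexx orbT.
have C01 : C0 <= C1 by rewrite le_max lexx.
exists (Num.sqrt (4 * Num.sqrt C1)).
move=> N d T P G v w N0 iid mv mw.
have mG : forall i j : 'I_N, (i < j)%N -> measurable_fun setT (G i j) by case: iid.
have hB := hyp N d T P G N0 iid.
have Np : 0 < N%:R :> R by rewrite ltr0n.
pose V k x := gibbs1 beta h (disorder_at G x) (fun s => v k (disorder_at G x) s ^+ 2).
pose W k x := gibbs1 beta h (disorder_at G x) (fun s => w k (disorder_at G x) s ^+ 2).
pose a k x := Num.sqrt (V k x * W k x).
pose Bf x := gibbs2 beta h (disorder_at G x) (fun s1 s2 => (overlap R s1 s2 - q) ^+ 4).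
pose b x := 2 * Num.sqrt (Num.sqrt (Bf x)).
pose f x := (N%:R ^+ 2)^-1 *
         \sum_(j < N) \sum_(k < N)
           gibbs1 beta h (disorder_at G x)
             (fun s => sdot beta h (disorder_at G x) j s * v k (disorder_at G x) s)
           * gibbs1 beta h (disorder_at G x)
             (fun s => w k (disorder_at G x) s * spin R s j).
pose K' := Num.sqrt (4 * Num.sqrt (C1 / N%:R ^+ 2)).
have mV k : measurable_fun setT (V k).
  exact: (@m_gibbs1 R beta h N d T G (fun s x => v k (disorder_at G x) s ^+ 2) mG
            (fun s => measurable_funX _ (mv k s))).
have mW k : measurable_fun setT (W k).
  exact: (@m_gibbs1 R beta h N d T G (fun s x => w k (disorder_at G x) s ^+ 2) mG
            (fun s => measurable_funX _ (mw k s))).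
have ma k : measurable_fun setT (a k) by apply: m_sqrt; exact: measurable_funM.
have mB : measurable_fun setT Bf.
  exact: (@m_gibbs2 R beta h N d T G (fun s t x => (overlap R s t - q) ^+ 4) mG
            (fun s t => measurable_cst _)).
have mb : measurable_fun setT b.
  by apply: measurable_funM; [exact: measurable_cst | do 2 apply: m_sqrt].
have msd j : measurable_fun setT (fun x => gibbs1 beta h (disorder_at G x) (fun s => spin R s j)).
  exact: (@m_gibbs1 R beta h N d T G (fun s x => spin R s j) mG (fun s => measurable_cst _)).
have mf : measurable_fun setT f.
  apply: measurable_funM; first exact: measurable_cst.
  apply: measurable_sum => j; apply: measurable_sum => k.
  apply: measurable_funM.
    apply: (@m_gibbs1 R beta h N d T G
       (fun s x => sdot beta h (disorder_at G x) j s * v k (disorder_at G x) s) mG) => s.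
    apply: measurable_funM; last exact: mv.
    by apply: measurable_funB; [exact: measurable_cst | exact: msd].
  apply: (@m_gibbs1 R beta h N d T G
     (fun s x => w k (disorder_at G x) s * spin R s j) mG) => s.
  by apply: measurable_funM; [exact: mw | exact: measurable_cst].
have V0 k x : 0 <= V k x by apply: gibbs1_ge0 => s; exact: sqr_ge0.
have W0 k x : 0 <= W k x by apply: gibbs1_ge0 => s; exact: sqr_ge0.
have a0 k x : 0 <= a k x by exact: sqrtr_ge0.
have B0 x : 0 <= Bf x.
  by apply: gibbs2_ge0 => s t; exact: exprn_even_ge0.
have b0 x : 0 <= b x by rewrite mulr_ge0 // sqrtr_ge0.
have hpt x : `|f x| <= \sum_(k < N) (N%:R^-1 * (a k x * b x)).
  exact: (pointwise beta h q (disorder_at G x) (fun k => v k (disorder_at G x))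
            (fun k => w k (disorder_at G x)) N0).

have hb : (sqrte (\int[P]_x (b x ^+ 2)%:E) <= K'%:E)%E.
  have e1 : (\int[P]_x (b x ^+ 2)%:E = 4%:E * \int[P]_x (Num.sqrt (Bf x))%:E)%E.
    transitivity (\int[P]_x ((4 : R)%:E * (Num.sqrt (Bf x))%:E))%E.
      apply: eq_integral => x _; rewrite -EFinM /b exprMn sqr_sqrtr ?sqrtr_ge0 //.
      by congr (_%:E); ring.
    apply: ge0_integralZl_EFin => //.
    by apply/measurable_EFinP; exact: m_sqrt.
  have e2 : (\int[P]_x (Num.sqrt (Bf x))%:E <= sqrte (\int[P]_x (Bf x)%:E))%E.
    have := @int_prod_le d T R P (fun x => Num.sqrt (Bf x)) (fun _ => 1) (m_sqrt mB)
      (measurable_cst _) (fun x => sqrtr_ge0 _) (fun _ => ler01).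
    have -> : (\int[P]_x (((fun _ : T => 1 : R) x) ^+ 2)%:E = 1)%E.
      rewrite (eq_integral (cst 1%:E)); last by move=> x _; rewrite expr1n.
      by rewrite integral_cst // mul1e; exact: probability_setT.
    rewrite /= sqrtr1 mule1.
    under eq_integral do rewrite mulr1.
    move/le_trans; apply; rewrite le_eqVlt; apply/orP; left; apply/eqP.
    by congr sqrte; apply: eq_integral => x _; rewrite sqr_sqrtr.
  have e3 : (sqrte (\int[P]_x (Bf x)%:E) <= (Num.sqrt (C1 / N%:R ^+ 2))%:E)%E.
    have : (\int[P]_x (Bf x)%:E <= (C1 / N%:R ^+ 2)%:E)%E.
      apply: le_trans hB _; rewrite lee_fin ler_wpM2r // invr_ge0 sqr_ge0.
    move=> hle; rewrite -[X in (_ <= X)%E]/(sqrte (C1 / N%:R ^+ 2)%:E) lee_sqrt //.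
    by rewrite lee_fin divr_ge0 // sqr_ge0.
  rewrite /K' -[X in (_ <= X)%E]/(sqrte (4 * Num.sqrt (C1 / N%:R ^+ 2))%:E).
  rewrite lee_sqrt ?lee_fin ?mulr_ge0 ?sqrtr_ge0 // e1 EFinM lee_wpmul2l //.
  exact: le_trans e2 e3.
have ha k : (\int[P]_x (a k x ^+ 2)%:E = \int[P]_x (V k x * W k x)%:E)%E.
  by apply: eq_integral => x _; rewrite sqr_sqrtr // mulr_ge0.
have main : (\int[P]_x (f x)%:E <=
    \sum_(k < N) ((N%:R^-1)%:E * (sqrte (\int[P]_x (V k x * W k x)%:E) * K'%:E)))%E.
  apply: le_trans (lee_abs _) _.
  apply: le_trans (le_abse_integral _ _ _) _ => //; first by apply/measurable_EFinP.
  apply: (@le_trans _ _ (\int[P]_x (\sum_(k < N) (N%:R^-1 * (a k x * b x)))%:E)%E).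
    apply: ge0_le_integral => //.
    - by apply: measurableT_comp => //; apply/measurable_EFinP.
    - apply/measurable_EFinP; apply: measurable_sum => k.
      by apply: measurable_funM; [exact: measurable_cst | exact: measurable_funM].
    - by move=> x _; rewrite abse_EFin lee_fin.
  rewrite (eq_integral (fun x => \sum_(k < N) (N%:R^-1 * (a k x * b x))%:E)); last first.
    by move=> x _; rewrite sumEFin.
  rewrite ge0_integral_sum //; last 2 first.
  - move=> k; apply/measurable_EFinP.
    by apply: measurable_funM; [exact: measurable_cst | exact: measurable_funM].
  - by move=> k x _; rewrite lee_fin mulr_ge0 ?invr_ge0 ?ler0n // mulr_ge0.
  apply: lee_sum => k _.
  rewrite (eq_integral (fun x => ((N%:R^-1)%:E * (a k x * b x)%:E)%E)); last first.
    by move=> x _; rewrite EFinM.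
  have nn : forall x, [set: T] x -> (0 <= (a k x * b x)%:E)%E.
    by move=> x _; rewrite lee_fin mulr_ge0.
  have mab : measurable_fun setT (fun x => (a k x * b x)%:E).
    by apply/measurable_EFinP; exact: measurable_funM.
  have kpos : 0 <= N%:R^-1 :> R by rewrite invr_ge0 ler0n.
  rewrite (ge0_integralZl_EFin P measurableT nn mab kpos).
  apply: lee_wpmul2l; first by rewrite lee_fin invr_ge0 ler0n.
  apply: le_trans (@int_prod_le d T R P (a k) b (ma k) mb (a0 k) b0) _.
  by rewrite ha; apply: lee_wpmul2l => //; exact: sqrte_ge0.
apply: le_trans main _; rewrite le_eqVlt; apply/orP; left; apply/eqP.
rewrite ge0_sume_distrr; last by move=> k _; exact: sqrte_ge0.
apply: eq_bigr => k _.
rewrite muleCA -EFinM muleC; congr (_ * _)%E; congr (_%:E).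
have sN : 0 < Num.sqrt (N%:R : R) by rewrite sqrtr_gt0.
have -> : N%:R `^ (3 / 2) = N%:R * Num.sqrt (N%:R : R).
  have -> : (3 / 2 : R) = 1 + 2^-1 by field.
  rewrite powRD; last by apply/implyP => _; rewrite gt_eqF.
  by rewrite powRr1 ?ler0n // powR12_sqrt // ler0n.
rewrite /K'.
have -> : Num.sqrt (C1 / N%:R ^+ 2) = Num.sqrt C1 / N%:R.
  rewrite sqrtrM // sqrtrV ?sqr_ge0 // sqrtr_sqr ger0_norm // ltW.
rewrite mulrA sqrtrM ?mulr_ge0 ?sqrtr_ge0 // sqrtrV ?ler0n //.
by field; rewrite !gt_eqF.
Qed.
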